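(* $$\lim_{k \to \infty} \sum_{n=0}^{\infty} \frac{1}{n!}\left\langle {n \atop k} \right\rangle = 2,$$ where the limit is over nonnegative integers $k$.
   Context: For integers $n,k\ge 0$, the Eulerian number $\left\langle {n \atop k} \right\rangle$ is the number of permutations of $\{1,\ldots,n\}$ with exactly $k$ ascents (positions $i$ with $\sigma(i)<\sigma(i+1)$), with $\left\langle {0 \atop 0} \right\rangle=1$ and $\left\langle {0 \atop k} \right\rangle=0$ for $k\ge1$; in particular $\left\langle {n \atop k} \right\rangle=0$ when $n<k$. Equivalently they satisfy $\left\langle {n \atop k} \right\rangle = (k+1)\left\langle {n-1 \atop k} \right\rangle + (n-k)\left\langle {n-1 \atop k-1} \right\rangle$. *)

(* Defs.v *)
From Stdlib Require Import Reals Arith.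
From Coquelicot Require Import Coquelicot.

(* Eulerian numbers <n, k> via the standard recurrence
   <0,0> = 1, <0,k> = 0 (k >= 1),
   <n+1,k> = (k+1)<n,k> + (n+1-k)<n,k-1>   (second term absent for k = 0). *)
Fixpoint eulerian (n k : nat) : nat :=
  match n with
  | O => match k with O => 1 | S _ => 0 end
  | S m => (k + 1) * eulerian m k
           + match k with O => 0 | S j => (m - j) * eulerian m j end
  end.

Definition eul_term (k n : nat) : R := INR (eulerian n k) / INR (fact n).

(* Main.v *)
Require Import Defs.
From Stdlib Require Import Reals Arith Lia Lra.
From Coquelicot Require Import Coquelicot.
From HB Require Import structures.
From mathcomp Require Import all_boot.

Unset Implicit Arguments.
Unset Strict Implicit.
Unset Printing Implicit Defensive.

Local Open Scope R_scope.
Arguments INR : simpl never.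
Arguments Rinv : simpl never.
Arguments Rdiv : simpl never.
Ltac rfix := rewrite /=; unfold Rdiv; match goal with |- @eq _ ?a ?b => change (@eq R a b) end.

Lemma RplusA : associative Rplus.
Proof. by move=> x y z; rewrite Rplus_assoc. Qed.
Lemma RmultA : associative Rmult.
Proof. by move=> x y z; rewrite Rmult_assoc. Qed.
HB.instance Definition _ := Monoid.isComLaw.Build R 0 Rplus
  RplusA Rplus_comm Rplus_0_l.
HB.instance Definition _ := Monoid.isComLaw.Build R 1 Rmult
  RmultA Rmult_comm Rmult_1_l.
HB.instance Definition _ := Monoid.isMulLaw.Build R 0 Rmult Rmult_0_l Rmult_0_r.
HB.instance Definition _ := Monoid.isAddLaw.Build R Rmult Rplus
  Rmult_plus_distr_r Rmult_plus_distr_l.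

Notation "\rsum_ ( i < n ) F" := (\big[Rplus/0]_(i < n) F)
  (at level 41, F at level 41, i, n at level 50).

Lemma fact_eq n : fact n = n`!.
Proof. elim: n => [|n IH] //=. rewrite factS -IH. by rewrite multE. Qed.

Lemma eulerian_zero n k : (n < k)%N -> eulerian n k = 0%N.
Proof.
elim: n k => [|n IH] [|k] //= H.
have h2 : eulerian n k = 0%N by apply: IH.
have h1 : eulerian n k.+1 = 0%N by apply: IH; apply: ltnW.
rewrite h1 h2; lia.
Qed.

Definition Rf (n k : nat) : R :=
  \rsum_(j < k.+1) ((-1)^j * INR 'C(n.+1, j) * INR (k.+1 - j) ^ n).

Lemma Rf0 n : Rf n 0 = 1.
Proof. rewrite /Rf big_ord_recl big_ord0 /= bin0 subn0 pow1; rfix; change (INR 1) with 1; ring. Qed.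

Lemma INR_sub m n : (m <= n)%N -> INR (n - m) = INR n - INR m.
Proof. move=> H; apply: minus_INR; exact/leP. Qed.

Lemma bin_id n i :
  (INR i + 1) * INR 'C(n.+1, i.+1) = (INR n + 1 - INR i) * INR 'C(n.+1, i).
Proof.
case: (leqP i n.+1) => Hi.
- have E := mul_bin_left n.+1 i.
  move/(congr1 INR): E; rewrite -!multE => E.
  rewrite !mult_INR INR_sub // in E.
  by rewrite -!S_INR.
- rewrite (bin_small Hi) bin_small; last by rewrite ltnS ltnW.
  change (INR 0) with 0; ring.
Qed.

Lemma Rf_rec n k : Rf n.+1 k.+1 = INR (k.+2) * Rf n k.+1 + (INR n - INR k) * Rf n k.
Proof.
pose C' (j : nat) := match j with 0 => 0 | i.+1 => INR 'C(n.+1, i) end.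
have term : forall j : nat, (j < k.+2)%N ->
  (-1)^j * INR 'C(n.+2, j) * INR (k.+2 - j)^(n.+1) =
  INR k.+2 * ((-1)^j * INR 'C(n.+1,j) * INR (k.+2-j)^n) +
  (INR k - INR n) * ((-1)^j * C' j * INR(k.+2-j)^n).
  move=> [|i] Hj.
  - rewrite /C' !bin0 subn0 pow_O.
    change (INR k.+2 ^ n.+1) with (INR k.+2 * INR k.+2 ^ n).
    set a := INR k.+2 ^ n. set b := INR k.+2. change (INR 1) with 1. rewrite !Rmult_1_l Rmult_0_l Rmult_0_r Rplus_0_r. reflexivity.
  - have Hx : INR (k.+2 - i.+1) = INR k + 1 - INR i.
      rewrite subSS INR_sub; last by apply: ltnW.
      rewrite S_INR; ring.
    rewrite /C' Hx binS plus_INR.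
    have := bin_id n i.
    set c1 := INR 'C(n.+1, i.+1); set c0 := INR 'C(n.+1, i).
    set p := (-1)^i.+1; set y := (INR k + 1 - INR i)^n.
    rewrite !S_INR => Hb.
    have -> : (INR k + 1 - INR i) ^ n.+1 = (INR k + 1 - INR i) * y by [].
    clearbody c1 c0 p y C'.
    have inner : (INR k + 1 - INR i)*(c1+c0) = (INR k + 1 + 1)*c1 + (INR k - INR n)*c0 by nra.
    transitivity (p*y*((INR k + 1 - INR i)*(c1+c0))); first ring.
    rewrite inner; ring.
rewrite /Rf (eq_bigr _ (fun (j : 'I_k.+2) _ => term j (ltn_ord j))) big_split -!big_distrr.
have S2 : \big[Rplus/0]_(i < k.+2) ((-1) ^ i * C' i * INR (k.+2 - i) ^ n) =
  (-1) * \big[Rplus/0]_(j < k.+1) ((-1) ^ j * INR 'C(n.+1, j) * INR (k.+1 - j) ^ n).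
  rewrite big_ord_recl /= Rmult_0_r Rmult_0_l Rplus_0_l big_distrr.
  apply: eq_bigr => i _ /=.
  rewrite subSS /C' add0n; rfix; ring.
rewrite S2 /=; rfix; ring.
Qed.


Lemma Rf0S k : Rf 0 k.+1 = 0.
Proof.
rewrite /Rf big_ord_recl big_ord_recl /= big1.
- rewrite bin0 bin1 /=. change (INR 1) with 1; ring.
- move=> i _; rewrite bin_small //. change (INR 0) with 0; ring.
Qed.

Lemma E_R n k : INR (eulerian n k) = Rf n k.
Proof.
elim: n k => [|n IH] [|k].
- by rewrite Rf0.
- by rewrite Rf0S.
- rewrite Rf0 /= !Nat.add_0_r IH Rf0 //.
- rewrite Rf_rec.
  change (eulerian n.+1 k.+1) with ((k.+1 + 1) * eulerian n k.+1 + (n - k) * eulerian n k)%coq_nat.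
  rewrite plus_INR !mult_INR !IH.
  case: (leqP k n) => Hk.
  + rewrite minus_INR; last exact/leP.
    rewrite !plus_INR; change (INR 1) with 1; rewrite !S_INR; ring.
  + have -> : Rf n k = 0 by rewrite -IH eulerian_zero.
    rewrite !plus_INR; change (INR 1) with 1; rewrite !S_INR; ring.
Qed.

Definition H (n k : nat) : R :=
  \rsum_(j < k) ((-1)^j * INR 'C(n, j) * INR (k - j) ^ n).

Definition Cp n j := match j with 0 => 0 | S i => INR 'C(n,i) end.

Lemma binR n j : INR 'C(n.+1, j) = INR 'C(n,j) + Cp n j.
Proof.
case: j => [|i] /=.
- rewrite !bin0 /=; ring.
- by rewrite binS -plusE plus_INR.
Qed.

Lemma Rf_H n k : Rf n k = H n k.+1 - H n k.
Proof.
rewrite /Rf.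
under eq_bigr => j _ do rewrite binR Rmult_plus_distr_l Rmult_plus_distr_r.
rewrite big_split /=.
have -> : \rsum_(i < k.+1) ((-1) ^ i * Cp n i * INR (k.+1 - i) ^ n) = - H n k.
  rewrite big_ord_recl /= Rmult_0_r Rmult_0_l Rplus_0_l /H.
  rewrite (big_endo Ropp); last first.
  - by rewrite Ropp_0.
  - by move=> x y; rewrite Ropp_plus_distr.
  apply: eq_bigr => i _ /=.
  rewrite subSS add0n; rfix; ring.
rewrite /H /Rminus; reflexivity.
Qed.

Lemma E_H n k : INR (eulerian n k) = H n k.+1 - H n k.
Proof. by rewrite E_R Rf_H. Qed.

Lemma exp_ser m : is_series (fun p => m^p / INR (fact p)) (exp m).
Proof.
have := is_exp_Reals m; rewrite /is_pseries.
apply: is_series_ext => n.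
by rewrite pow_n_pow /scal /= /mult /=; rewrite /Rdiv Rmult_comm.
Qed.

Lemma is_series_zero : is_series (fun _ : nat => 0) 0.
Proof.
have := is_series_scal_l 0 _ _ (@exp_ser 0).
rewrite /scal /= /mult /= Rmult_0_l.
by apply: is_series_ext => n; rewrite Rmult_0_l.
Qed.

Lemma ser_shift_zero j : forall (b : nat -> R) l,
  (forall n, (n < j)%N -> b n = 0) -> is_series (fun p => b (j + p)%N) l -> is_series b l.
Proof.
elim: j => [|j IH] b l Hb Hs.
- by apply: is_series_ext Hs => n.
- apply: IH => [n Hn|]; first by apply: Hb; apply: ltn_trans Hn _.
  apply: (is_series_decr_1 (fun p => b (j + p)%N)).
  rewrite addn0 Hb // opp_zero plus_zero_r.
  by apply: is_series_ext Hs => n; rewrite addSnnS.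
Qed.

Lemma ser_bin j m : is_series (fun n => INR 'C(n,j) * m^n / INR (fact n))
  (m^j * exp m / INR (fact j)).
Proof.
apply: (ser_shift_zero j).
- move=> n Hn; rewrite bin_small //; change (INR 0) with 0; rewrite /Rdiv; ring.
- have := is_series_scal_l (m^j / INR (fact j)) _ _ (@exp_ser m).
  rewrite /scal /= /mult /=.
  have -> : m ^ j / INR (fact j) * exp m = m ^ j * exp m / INR (fact j).
    by rewrite /Rdiv; ring.
  apply: is_series_ext => p.
  have Hb := bin_fact (leq_addr p j).
  rewrite addKn -!fact_eq in Hb.
  move/(congr1 INR): Hb; rewrite -!multE !mult_INR => Hb.
  rewrite -Hb pow_add.
  have h1 := INR_fact_neq_0 j; have h2 := INR_fact_neq_0 p.
  have h3 : INR 'C(j + p, j) <> 0.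
    apply: not_0_INR; apply/eqP; by rewrite -lt0n bin_gt0 leq_addr.
  rfix; field; repeat split => //.
Qed.

Lemma is_series_bigsum K (f : nat -> nat -> R) (l : nat -> R) :
  (forall j, is_series (f j) (l j)) ->
  is_series (fun n => \rsum_(j < K) f j n) (\rsum_(j < K) l j).
Proof.
move=> Hf; elim: K => [|K IH].
- rewrite big_ord0; apply: is_series_ext is_series_zero => n; by rewrite big_ord0.
- rewrite big_ord_recr /=.
  have := is_series_plus _ _ _ _ IH (Hf K).
  by apply: is_series_ext => n; rewrite big_ord_recr.
Qed.

Lemma exp_INR p : exp (INR p) = exp 1 ^ p.
Proof.
elim: p => [|p IH]; first by change (INR 0) with 0; rewrite exp_0.
by rewrite S_INR exp_plus IH /=; ring.
Qed.

Definition W (k : nat) : R :=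
  \rsum_(j < k) ((-1)^j * INR (k - j) ^ j * exp 1 ^ (k - j) / INR (fact j)).

Lemma ser_H k : is_series (fun n => H n k / INR (fact n)) (W k).
Proof.
have := is_series_bigsum k
  (fun j n => (-1)^j * (INR 'C(n,j) * INR (k-j)^n / INR (fact n)))
  (fun j => (-1)^j * (INR (k-j)^j * exp (INR (k-j)) / INR (fact j)))
  (fun j => is_series_scal_l _ _ _ (ser_bin j (INR (k-j)))).
have -> : \rsum_(j < k) ((-1)^j * (INR (k-j)^j * exp (INR (k-j)) / INR (fact j))) = W k.
  rewrite /W; apply: eq_bigr => j _; rewrite exp_INR /Rdiv; rfix; ring.
apply: is_series_ext => n.
rewrite /H /Rdiv big_distrl /=; apply: eq_bigr => j _; rfix; ring.
Qed.

Lemma ser_eul k : is_series (eul_term k) (W k.+1 - W k).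
Proof.
have := is_series_minus _ _ _ _ (ser_H k.+1) (ser_H k).
apply: is_series_ext => n.
rewrite /eul_term E_H /minus /plus /opp /=; rfix; rewrite /Rdiv; ring.
Qed.

Lemma tri (F : nat -> nat -> R) K :
  \rsum_(i < K) \rsum_(j < K - i) F i j =
  \rsum_(l < K) \rsum_(j < l.+1) F (l - j)%N j.
Proof.
transitivity (\rsum_(i < K) \big[Rplus/0]_(j < K | (j < K - i)%N) F i j).
  by apply: eq_bigr => i _; apply: big_ord_widen; apply: leq_subr.
transitivity (\rsum_(l < K) \big[Rplus/0]_(j < K | (j < l.+1)%N) F (l - j)%N j); last first.
  by apply: eq_bigr => l _; symmetry; exact: (big_ord_widen _ (fun j => F (l - j)%N j) (ltn_ord l)).
rewrite (exchange_big_dep xpredT) //= [RHS](exchange_big_dep xpredT) //=.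
apply: eq_bigr => j _.
transitivity (\big[Rplus/0]_(i < K | (i < K - j)%N) F i j).
  apply: eq_bigl => i /=; rewrite ltn_subRL ltn_subRL addnC //.
transitivity (\rsum_(i < K - j) F i j).
  by symmetry; exact: (big_ord_widen _ (fun i => F i j) (leq_subr j K)).
rewrite -(big_mkord xpredT (fun i => F i j)).
have := @big_addn R 0 Rplus 0 K j xpredT (fun l => F (l - j)%N j).
rewrite add0n big_geq_mkord /= => ->.
by apply: eq_bigr => i _; rewrite addnK.
Qed.

Lemma sum_f_big (f : nat -> R) n : sum_f_R0 f n = \rsum_(i < n.+1) f i.
Proof.
elim: n => [|n IH] /=; first by rewrite big_ord_recr big_ord0 /= Rplus_0_l.
by rewrite IH [RHS]big_ord_recr.
Qed.

Lemma binom_sum (a : R) l :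
  \rsum_(j < l.+1) ((-1)^j * a^j / (INR (fact j) * INR (fact (l - j)))) =
  (1 - a)^l / INR (fact l).
Proof.
have := Binomial.binomial (- a) 1 l; rewrite sum_f_big => HB.
have Hf := INR_fact_neq_0 l.
apply: (Rmult_eq_reg_l (INR (fact l))) => //.
rewrite big_distrr /=.
have -> : INR (fact l) * ((1 - a) ^ l / INR (fact l)) = (1 - a)^l by field.
rewrite (_ : 1 - a = - a + 1); last by ring.
rewrite HB; apply: eq_bigr => j _.
rewrite pow1 /Binomial.C.
have h1 := INR_fact_neq_0 j; have h2 := INR_fact_neq_0 (l - j).
rewrite (_ : - a = -1 * a); last by ring.
rewrite Rpow_mult_distr -minusE.
rfix; field; split => //.
Qed.

Lemma Wrel k : \rsum_(i < k.+1) (W (k.+1 - i) / INR (fact i)) =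
  exp 1 * W k + (if k is 0 then exp 1 else 0).
Proof.
pose F i j := (-1)^j * INR (k.+1 - i - j)^j * exp 1^(k.+1 - i - j) /
   (INR (fact j) * INR (fact i)).
transitivity (\rsum_(i < k.+1) \rsum_(j < k.+1 - i) F i j).
  apply: eq_bigr => i _; rewrite /W /Rdiv big_distrl; apply: eq_bigr => j _.
  rewrite /F.
  have h1 := INR_fact_neq_0 j; have h2 := INR_fact_neq_0 i.
  rfix; field; split => //.
rewrite tri.
transitivity (\rsum_(l < k.+1) (exp 1^(k.+1 - l) * ((1 - INR (k.+1 - l))^l / INR (fact l)))).
  apply: eq_bigr => l _; rewrite -binom_sum big_distrr; apply: eq_bigr => j _.
  have Hj : (j <= l)%N by rewrite -ltnS ltn_ord.
  rewrite /F -subnDA subnK //.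
  have h1 := INR_fact_neq_0 j; have h2 := INR_fact_neq_0 (l - j).
  rfix; field; split => //.
rewrite big_ord_recr /= subSnn.
have -> : (1 - INR 1) = 0 by change (INR 1) with 1; ring.
congr (_ + _).
- rewrite /W big_distrr; apply: eq_bigr => l _ /=.
  have Hl : (l <= k)%N by apply: ltnW.
  rewrite subSn // S_INR.
  rewrite (_ : 1 - (INR (k - l) + 1) = -1 * INR (k - l)); last by ring.
  rewrite Rpow_mult_distr.
  have h1 := INR_fact_neq_0 l.
  rfix; simpl pow; field => //.
- case: k F => [|k] F /=; first by change (INR 1) with 1; field.
  by rewrite /Rdiv !Rmult_0_l Rmult_0_r.
Qed.

Definition conv (a b : nat -> R) k := \rsum_(i < k.+1) (a i * b (k - i)%N).
Definition cumsum (a : nat -> R) k := \rsum_(i < k.+1) a i.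
Definition diff (b : nat -> R) k := b k - (if k is S k' then b k' else 0).

Lemma conv_prev (A b : nat -> R) k :
  \rsum_(i < k.+1) (A i * (if (k - i)%N is S m then b m else 0)) =
  (if k is S k' then conv A b k' else 0).
Proof.
rewrite big_ord_recr /= subnn Rmult_0_r Rplus_0_r.
case: k => [|k]; first by rewrite big_ord0.
rewrite /conv; apply: eq_bigr => i _.
by rewrite subSn //; exact: ltn_ord i.
Qed.

Lemma conv_cumsum (a b : nat -> R) k :
  conv (cumsum a) b k = conv a b k + (if k is S k' then conv (cumsum a) b k' else 0).
Proof.
case: k => [|k].
- by rewrite /conv /cumsum !big_ord_recl !big_ord0 /=; rfix; ring.
- rewrite /conv big_ord_recl [\rsum_(i < k.+2) _]big_ord_recl.
  have -> : \rsum_(i < k.+1) (cumsum a (bump 0 i) * b (k.+1 - bump 0 i)%N) =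
     \rsum_(i < k.+1) (a (bump 0 i) * b (k.+1 - bump 0 i)%N) +
     \rsum_(i < k.+1) (cumsum a i * b (k - i)%N).
    rewrite -big_split; apply: eq_bigr => i _ /=.
    rewrite /bump /= add1n subSS /cumsum big_ord_recr /=; rfix; ring.
  rewrite /cumsum big_ord_recl big_ord0 /=; rfix; ring.
Qed.

Lemma conv_cumsum_diff (a b : nat -> R) k :
  conv (cumsum a) (diff b) k = conv a b k.
Proof.
have -> : conv (cumsum a) (diff b) k =
  conv (cumsum a) b k - \rsum_(i < k.+1) (cumsum a i * (if (k - i)%N is S m then b m else 0)).
  rewrite /conv /diff /Rminus (big_endo Ropp); last first.
  - by rewrite Ropp_0.
  - by move=> x y; rewrite Ropp_plus_distr.
  rewrite -big_split; apply: eq_bigr => i _ /=; rfix; ring.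
rewrite conv_prev conv_cumsum; case: k => [|k] /=; rfix; ring.
Qed.

Definition g (i : nat) : R := / INR (fact i) - (if i == 1%N then exp 1 else 0).
Definition w (k : nat) : R := W k.+1.
Definition s (k : nat) : R := diff w k.
Definition D (k : nat) : R := diff s k.
Definition Q (k : nat) : R := cumsum (cumsum g) k.

Lemma W0 : W 0 = 0.
Proof. by rewrite /W big_ord0. Qed.

Lemma s_eq k : s k = W k.+1 - W k.
Proof. by case: k => [|k]; rewrite /s /diff /w // W0. Qed.

Lemma conv_g_w k : conv g w k = if k is 0 then exp 1 else 0.
Proof.
have -> : conv g w k = \rsum_(i < k.+1) (W (k.+1 - i) / INR (fact i)) -
   \rsum_(i < k.+1) ((if (i : nat) == 1%N then exp 1 else 0) * w (k - i)%N).
  rewrite /conv /Rminus (big_endo Ropp); last first.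
  - by rewrite Ropp_0.
  - by move=> x y; rewrite Ropp_plus_distr.
  rewrite -big_split; apply: eq_bigr => i _ /=.
  rewrite /g /w subSn; last exact: ltn_ord i.
  rfix; ring.
rewrite Wrel.
case: k => [|k].
- rewrite big_ord_recl big_ord0 /= W0; rfix; ring.
- rewrite big_ord_recl big_ord_recl /= big1 => [|i _]; last by rewrite Rmult_0_l.
  rewrite /w /bump /= subn1 /=; rfix; ring.
Qed.

Lemma conv_Q_D k : conv Q D k = if k is 0 then exp 1 else 0.
Proof. by rewrite /Q /D conv_cumsum_diff /s conv_cumsum_diff conv_g_w. Qed.

Definition c (n : nat) : R := cumsum (fun l => / INR (fact l)) n.
Definition r (n : nat) : R := exp 1 - c n.

Lemma e_ser : is_series (fun l => / INR (fact l)) (exp 1).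
Proof.
apply: is_series_ext (@exp_ser 1) => n.
by rewrite pow1 /Rdiv Rmult_1_l.
Qed.

Lemma sum_n_big (a : nat -> R) n : sum_n a n = \rsum_(i < n.+1) a i.
Proof. by rewrite sum_n_Reals sum_f_big. Qed.

Lemma r_ser n : is_series (fun p => / INR (fact (n.+1 + p))) (r n).
Proof.
apply: (is_series_incr_n (fun l => / INR (fact l)) n.+1 (r n)).
- apply/ltP; by [].
- rewrite /= sum_n_big /r /c /cumsum /plus /=.
  have -> : exp 1 - \rsum_(i < n.+1) / INR (fact i) + \rsum_(i < n.+1) / INR (fact i) = exp 1 by ring.
  exact: e_ser.
Qed.

Lemma fact_ge n p : INR (fact n) * INR (n.+1)^(p.+1) <= INR (fact (n.+1 + p)).
Proof.
elim: p => [|p IH].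
- rewrite addn0 pow_1; change (fact n.+1) with (n.+1 * fact n)%coq_nat.
  rewrite mult_INR; apply: Req_le; ring.
- rewrite addnS.
  change (fact (n.+1 + p).+1) with ((n.+1 + p).+1 * fact (n.+1 + p))%coq_nat.
  rewrite mult_INR.
  have h1 : INR n.+1 <= INR (n.+1 + p).+1.
    apply: le_INR; rewrite -plusE; lia.
  have h2 : 0 <= INR n.+1 by apply: pos_INR.
  have h3 : 0 <= INR (fact n) * INR n.+1 ^ p.+1.
    apply: Rmult_le_pos; [apply: pos_INR | apply: pow_le; apply: pos_INR].
  change (INR n.+1 ^ p.+2) with (INR n.+1 * INR n.+1 ^ p.+1).
  rewrite (Rmult_comm (INR n.+1)) -Rmult_assoc Rmult_comm.
  apply: Rmult_le_compat => //.
Qed.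

Lemma Series_nonneg (a : nat -> R) l : is_series a l -> (forall n, 0 <= a n) -> 0 <= l.
Proof.
move=> Ha Hp.
rewrite -(is_series_unique _ _ Ha) -(is_series_unique _ _ is_series_zero).
apply: Series_le => //; last by exists l.
move=> n; split; [apply: Rle_refl | exact: Hp].
Qed.

Lemma r_nonneg n : 0 <= r n.
Proof.
apply: (Series_nonneg _ _ (r_ser n)) => p.
apply: Rlt_le; apply: Rinv_0_lt_compat; apply: lt_0_INR; apply: lt_O_fact.
Qed.

Lemma r_le n : (0 < n)%N -> r n <= / (INR (fact n) * INR n).
Proof.
move=> Hn.
have Hn' : 0 < INR n by apply: lt_0_INR; apply/ltP.
have Hf : 0 < INR (fact n) by apply: lt_0_INR; apply: lt_O_fact.
have Hn1 : 0 < INR n.+1 by apply: lt_0_INR; apply/ltP.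
set q := / INR n.+1.
have Hq : 0 < q < 1.
  split; first by apply: Rinv_0_lt_compat.
  rewrite /q -Rinv_1; apply: Rinv_lt_contravar; first by lra.
  rewrite S_INR; lra.
have Hg := is_series_scal_l (/ INR (fact n) * q) _ _ (is_series_geom q ltac:(rewrite Rabs_pos_eq; lra)).
rewrite -(is_series_unique _ _ (r_ser n)).
have -> : / (INR (fact n) * INR n) = / INR (fact n) * q * / (1 - q).
  rewrite /q S_INR; field; lra.
have HgS := is_series_unique _ _ Hg.
rewrite /scal /= /mult /= in HgS; rewrite -HgS.
apply: Series_le; last by eexists; exact: Hg.
move=> p; split.
- apply: Rlt_le; apply: Rinv_0_lt_compat; apply: lt_0_INR; apply: lt_O_fact.
- rewrite /scal /= /mult /=.
  have Hge := fact_ge n p.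
  have Hpos : 0 < INR (fact n) * INR n.+1 ^ p.+1.
    apply: Rmult_lt_0_compat => //; apply: pow_lt; exact: Hn1.
  apply: Rle_trans (Rinv_le_contravar _ _ Hpos Hge) _.
  apply: Req_le; rewrite /q pow_inv; simpl pow.
  have := pow_lt _ p Hn1 => Hp.
  field; repeat split; lra.
Qed.

Lemma cumsumS (a : nat -> R) k : cumsum a k.+1 = cumsum a k + a k.+1.
Proof. by rewrite /cumsum big_ord_recr. Qed.

Lemma rS n : r n.+1 = r n - / INR (fact n.+1).
Proof. rewrite /r /c cumsumS; ring. Qed.

Lemma cumsum_g k : cumsum g k = c k - (if k is 0 then 0 else exp 1).
Proof.
elim: k => [|k IH].
- by rewrite /c /cumsum !big_ord_recl !big_ord0 /g /=; rfix; ring.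
- rewrite cumsumS IH /c (cumsumS (fun l => / INR (fact l)) k) /g.
  case: k IH => [|k] IH /=; rfix; ring.
Qed.

Lemma factS_INR n : INR (fact n.+1) = INR n.+1 * INR (fact n).
Proof. by change (fact n.+1) with (n.+1 * fact n)%coq_nat; rewrite mult_INR. Qed.

Lemma Q_form k : Q k = / INR (fact k.+1) - INR k * r k.+1.
Proof.
elim: k => [|k IH].
- rewrite /Q /cumsum big_ord_recl big_ord0 /=.
  change (fact 1) with 1%N; change (INR 0) with 0; change (INR 1) with 1.
  rewrite (_ : \rsum_(i < 1) g i = g 0); last by rewrite big_ord_recl big_ord0 /=; rfix; ring.
  rewrite /g /=; change (INR 1) with 1; rfix; field.
- have Hc : cumsum g k.+1 = c k.+1 - exp 1 by rewrite cumsum_g.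
  rewrite /Q cumsumS -/(Q k) IH Hc (rS k.+1).
  have -> : c k.+1 = exp 1 - r k.+1 by rewrite /r; ring.
  rewrite (factS_INR k.+1) !S_INR.
  have h1 := INR_fact_neq_0 k.+1.
  have h2 : INR k + 1 + 1 <> 0 by have := pos_INR k; lra.
  rfix; field; split => //.
Qed.

Lemma Q_bounds k : 0 <= Q k <= / INR (fact k.+1).
Proof.
rewrite Q_form.
have Hr := r_nonneg k.+1.
have Hrl := r_le k.+1 (ltn0Sn k).
have Hk := pos_INR k.
have Hf : 0 < INR (fact k.+1) by apply: lt_0_INR; apply: lt_O_fact.
have Hk1 : 0 < INR k.+1 by apply: lt_0_INR; apply/ltP.
have Hfi : 0 < / INR (fact k.+1) by apply: Rinv_0_lt_compat.
have H1 : INR k * r k.+1 <= INR k * / (INR (fact k.+1) * INR k.+1).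
  by apply: Rmult_le_compat_l.
have H2 : INR k * / (INR (fact k.+1) * INR k.+1) <= / INR (fact k.+1).
  rewrite Rinv_mult -Rmult_assoc (Rmult_comm (INR k)) Rmult_assoc.
  rewrite -{2}(Rmult_1_r (/ INR (fact k.+1))).
  apply: Rmult_le_compat_l; first lra.
  rewrite S_INR in Hk1 *.
  apply: (Rmult_le_reg_r (INR k + 1)) => //.
  rewrite Rmult_assoc Rinv_l; lra.
have H0 : 0 <= INR k * r k.+1 by apply: Rmult_le_pos.
split; lra.
Qed.

Lemma big_le n (F G : nat -> R) :
  (forall i, (i < n)%N -> F i <= G i) -> \rsum_(i < n) F i <= \rsum_(i < n) G i.
Proof.
move=> H.
elim: n H => [|n IH] H; first by rewrite !big_ord0; apply: Rle_refl.
rewrite !big_ord_recr /=; apply: Rplus_le_compat.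
- apply: IH => i Hi; apply: H; apply: ltn_trans Hi _; done.
- by apply: H.
Qed.

Lemma big_abs n (F : nat -> R) : Rabs (\rsum_(i < n) F i) <= \rsum_(i < n) Rabs (F i).
Proof.
elim: n => [|n IH]; first by rewrite !big_ord0 Rabs_R0; apply: Rle_refl.
rewrite !big_ord_recr /=.
apply: Rle_trans (Rabs_triang _ _) _; apply: Rplus_le_compat_r; exact: IH.
Qed.

Lemma fact_ge3 m : 2 * 3^m <= INR (fact m.+2).
Proof.
elim: m => [|m IH].
- change (fact 2) with 2%N; simpl; change (INR 2) with 2; lra.
- rewrite factS_INR !S_INR.
  have := pos_INR m => Hm.
  change (3 ^ m.+1) with (3 * 3 ^ m).
  have h : 0 <= 2 * 3 ^ m by have := pow_le 3 m ltac:(lra); lra.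
  nra.
Qed.

Lemma geom_part k : \rsum_(m < k) (10/27)^m = 27/17 * (1 - (10/27)^k).
Proof.
elim: k => [|k IH]; first by rewrite big_ord0 /=; ring.
rewrite big_ord_recr /= IH; rfix; field.
Qed.

Lemma key_sum k : \rsum_(m < k) (/ INR (fact m.+2) * (10/9)^(m.+1)) <= 1.
Proof.
apply: Rle_trans (_ : \rsum_(m < k) (5/9 * (10/27)^m) <= 1).
  apply: (big_le k (fun m => / INR (fact m.+2) * (10/9)^(m.+1)) (fun m => 5/9 * (10/27)^m)) => m _.
  have H1 := fact_ge3 m.
  have H3 : 0 < 3 ^ m by apply: pow_lt; lra.
  have H2 : 0 < 2 * 3 ^ m by lra.
  have H4 : 0 < (10/9)^(m.+1) by apply: pow_lt; lra.
  apply: Rle_trans (_ : / (2 * 3^m) * (10/9)^(m.+1) <= _).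
    apply: Rmult_le_compat_r; first lra.
    by apply: Rinv_le_contravar.
  apply: Req_le.
  have E : (10/27)^m * 3^m = (10/9)^m.
    by rewrite -Rpow_mult_distr; congr (_ ^ _); field.
  change ((10/9)^(m.+1)) with (10/9 * (10/9)^m).
  rewrite -E; field; lra.
have -> : \rsum_(m < k) (5/9 * (10/27)^m) = 5/9 * \rsum_(m < k) (10/27)^m.
  by rewrite big_distrr.
rewrite geom_part.
have : 0 <= (10/27)^k by apply: pow_le; lra.
lra.
Qed.

Lemma Q0 : Q 0 = 1.
Proof. rewrite Q_form; change (INR 0) with 0; change (INR (fact 1)) with 1; rfix; field. Qed.

Lemma pow_split i k : (i <= k)%N ->
  (9/10)^(k - i) = (9/10)^(k.+1) * (10/9)^(i.+1).
Proof.
move=> Hi.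
have -> : (9/10)^(k.+1) = (9/10)^(k - i) * (9/10)^(i.+1).
  by rewrite -pow_add; congr (_ ^ _); rewrite plusE addnS subnK.
rewrite Rmult_assoc -Rpow_mult_distr (_ : 9/10 * (10/9) = 1); last by field.
by rewrite pow1 Rmult_1_r.
Qed.

Lemma D_bound k : Rabs (D k) <= exp 1 * (9/10)^k.
Proof.
have He := exp_pos 1.
elim/ltn_ind: k => k IH.
have HC := conv_Q_D k.
rewrite /conv big_ord_recl /= Q0 subn0 Rmult_1_l in HC.
case: k IH HC => [|k] IH HC.
- rewrite big_ord0 Rplus_0_r in HC.
  rewrite HC /= Rmult_1_r Rabs_pos_eq; lra.
- set S := \big[_/_]_(i < k.+1) _ in HC.
  have -> : D k.+1 = - S by lra.
  rewrite /S.
  rewrite Rabs_Ropp; apply: Rle_trans (big_abs k.+1 (fun i => Q (bump 0 i) * D (k.+1 - bump 0 i)%N)) _.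
  apply: Rle_trans (_ : \rsum_(i < k.+1) (/ INR (fact i.+2) * (exp 1 * (9/10)^(k - i))) <= _).
    apply: (big_le k.+1 (fun i => Rabs (Q (bump 0 i) * D (k.+1 - bump 0 i)%N))
        (fun i => / INR (fact i.+2) * (exp 1 * (9/10)^(k - i)))) => i Hi.
    rewrite Rabs_mult /bump /= add1n subSS.
    apply: Rmult_le_compat; try exact: Rabs_pos.
    + have := Q_bounds i.+1; move=> [h1 h2]; rewrite Rabs_pos_eq //.
    + apply: IH; rewrite ltnS; apply: leq_subr.
  have -> : \rsum_(i < k.+1) (/ INR (fact i.+2) * (exp 1 * (9/10)^(k - i))) =
     exp 1 * (9/10)^(k.+1) * \rsum_(i < k.+1) (/ INR (fact i.+2) * (10/9)^(i.+1)).
    rewrite big_distrr; apply: eq_bigr => i _ /=.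
    rewrite pow_split; last by rewrite -ltnS ltn_ord.
    rfix; ring.
  have := key_sum k.+1.
  have : 0 < exp 1 * (9/10)^(k.+1) by apply: Rmult_lt_0_compat => //; apply: pow_lt; lra.
  nra.
Qed.

Lemma cumsum_diff (a : nat -> R) k : cumsum (diff a) k = a k.
Proof.
elim: k => [|k IH].
- rewrite /cumsum big_ord_recl big_ord0 /diff /=; rfix; ring.
- rewrite cumsumS IH /diff; ring.
Qed.

Lemma sum_n_cumsum (a : nat -> R) k : sum_n a k = cumsum a k.
Proof. by rewrite sum_n_big. Qed.

Lemma is_series_lim (a : nat -> R) (l : R) :
  is_series a l <-> is_lim_seq (cumsum a) l.
Proof.
split => H.
- apply: (is_lim_seq_ext (sum_n a)); first exact: sum_n_cumsum.
  exact: H.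
- have H' : is_lim_seq (sum_n a) l.
    apply: (is_lim_seq_ext (cumsum a)) => //; by move=> n; rewrite sum_n_cumsum.
  exact: H'.
Qed.

Lemma absD : ex_series (fun n => Rabs (D n)).
Proof.
apply: (ex_series_le _ (fun n => scal (exp 1) ((9/10)^n))).
- move=> n; rewrite /norm /= /abs /= Rabs_Rabsolu /scal /= /mult /=.
  exact: D_bound.
- apply: ex_series_scal_l; apply: ex_series_geom.
  rewrite Rabs_pos_eq; lra.
Qed.

Lemma s_lim : is_lim_seq s (Series D).
Proof.
have HD : is_series D (Series D) by apply: Series_correct; apply: ex_series_Rabs; exact: absD.
move/is_series_lim: HD.
apply: is_lim_seq_ext => n.
by rewrite /D cumsum_diff.
Qed.

Definition a_ (i : nat) : R := INR i * INR i.+1 / 2 * r i.+1.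

Lemma Q_decomp i : Q i = / INR (fact i) - INR i / (2 * INR (fact i)) - diff a_ i.
Proof.
case: i => [|j].
- rewrite Q0 /diff /a_; change (INR 0) with 0; change (INR (fact 0)) with 1; rfix; field.
- rewrite Q_form /diff /a_ (rS j.+1) (factS_INR j.+1) (factS_INR j) !S_INR.
  have h1 := INR_fact_neq_0 j.
  have := pos_INR j => Hj.
  rfix; field; split => //; lra.
Qed.

Lemma fact_ge_n n : INR n <= INR (fact n).
Proof.
elim: n => [|n IH]; first by change (INR 0) with 0; apply: pos_INR.
rewrite factS_INR.
have H1 : 1 <= INR (fact n) by apply: (le_INR 1); apply: lt_O_fact.
have := pos_INR n.+1 => H2.
rewrite -{1}(Rmult_1_r (INR n.+1)); apply: Rmult_le_compat_l => //.
Qed.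

Lemma inv_lim : is_lim_seq (fun n => / INR n.+1) 0.
Proof.
have H := is_lim_seq_inv INR p_infty is_lim_seq_INR ltac:(discriminate).
rewrite /= in H.
by move/is_lim_seq_incr_1: H.
Qed.

Lemma a_lim : is_lim_seq a_ 0.
Proof.
apply: (is_lim_seq_le_le (fun _ => 0) a_ (fun n => / INR n.+1)); last first.
- exact: inv_lim.
- exact: is_lim_seq_const.
move=> n.
have Hr := r_nonneg n.+1.
have Hrl := r_le n.+1 (ltn0Sn n).
have Hn := pos_INR n.
have Hn1 : 0 < INR n.+1 by apply: lt_0_INR; apply/ltP.
have Hf : 0 < INR (fact n) by apply: lt_0_INR; apply: lt_O_fact.
have Hfn := fact_ge_n n.
rewrite /a_; split.
- apply: Rmult_le_pos => //; apply: Rmult_le_pos; last lra.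
  by apply: Rmult_le_pos; lra.
- rewrite factS_INR in Hrl.
  apply: Rle_trans (_ : INR n * INR n.+1 / 2 * / (INR n.+1 * INR (fact n) * INR n.+1) <= _).
    apply: Rmult_le_compat_l => //.
    apply: Rmult_le_pos; last lra.
    by apply: Rmult_le_pos; lra.
  apply: (Rmult_le_reg_r (2 * INR n.+1 * INR (fact n))).
    by apply: Rmult_lt_0_compat => //; lra.
  have -> : INR n * INR n.+1 / 2 * / (INR n.+1 * INR (fact n) * INR n.+1) *
     (2 * INR n.+1 * INR (fact n)) = INR n.
    field; lra.
  have -> : / INR n.+1 * (2 * INR n.+1 * INR (fact n)) = 2 * INR (fact n).
    field; lra.
  lra.
Qed.

Lemma n_fact_ser : is_series (fun i => INR i / INR (fact i)) (exp 1).
Proof.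
apply: is_series_decr_1.
change (INR 0) with 0; rewrite /Rdiv Rmult_0_l opp_zero plus_zero_r.
apply: is_series_ext e_ser => n.
rewrite factS_INR.
have h1 := INR_fact_neq_0 n.
have h2 : INR n.+1 <> 0 by apply: not_0_INR.
rfix; field; split => //.
Qed.

Lemma Q_ser : is_series Q (exp 1 / 2).
Proof.
have H1 := e_ser.
have H2 := is_series_scal_l (/ 2) _ _ n_fact_ser.
have H3 : is_series (diff a_) 0.
  apply/is_series_lim; apply: is_lim_seq_ext a_lim => n.
  by rewrite cumsum_diff.
have H := is_series_minus _ _ _ _ (is_series_minus _ _ _ _ H1 H2) H3.
have -> : exp 1 / 2 = minus (minus (exp 1) (scal (/ 2) (exp 1))) 0.
  rewrite /minus /plus /opp /scal /= /mult /=; field.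
apply: is_series_ext H => n.
rewrite Q_decomp /minus /plus /opp /scal /= /mult /=.
have h1 := INR_fact_neq_0 n.
rfix; field => //.
Qed.

Lemma delta_ser : is_series (fun n => if n is 0 then exp 1 else 0) (exp 1).
Proof.
apply: is_series_decr_1 => /=.
rewrite /plus /opp /= Rplus_opp_r.
exact: is_series_zero.
Qed.

Lemma absQ : ex_series (fun n => Rabs (Q n)).
Proof.
apply: (ex_series_le _ (fun n => / INR (fact n))); last by exists (exp 1); exact: e_ser.
move=> n; rewrite /norm /= /abs /= Rabs_Rabsolu.
have [h1 h2] := Q_bounds n.
rewrite Rabs_pos_eq //; apply: Rle_trans h2 _.
apply: Rinv_le_contravar; first by apply: lt_0_INR; apply: lt_O_fact.
apply: le_INR; apply: fact_le; lia.
Qed.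

Lemma L2 : Series D = 2.
Proof.
have HD : is_series D (Series D) by apply: Series_correct; apply: ex_series_Rabs; exact: absD.
have HQD := is_series_mult Q D _ _ Q_ser HD absQ absD.
have HQD' : is_series (fun n => if n is 0 then exp 1 else 0) (exp 1 / 2 * Series D).
  apply: is_series_ext HQD => n.
  rewrite sum_f_big -conv_Q_D /conv; apply: eq_bigr => i _ //.
have := is_series_unique _ _ HQD'.
rewrite (is_series_unique _ _ delta_ser) => HE.
have He := exp_pos 1.
apply: (Rmult_eq_reg_l (exp 1 / 2)); last lra.
rewrite -HE; field.
Qed.

Theorem mainTheorem4 :
  (forall k : nat, ex_series (eul_term k)) /\
  is_lim_seq (fun k : nat => Series (eul_term k)) 2.
Proof.
split.
- move=> k; eexists; exact: ser_eul k.
- have H := s_lim; rewrite L2 in H.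
  apply: is_lim_seq_ext H => k.
  by rewrite (is_series_unique _ _ (ser_eul k)) s_eq.
Qed.
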